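(* Let $(S,T,\alpha,\beta)$ be a matched product system of left inverse semi-braces such that the maps $r_S$ and $r_T$ associated to $S$ and $T$ are solutions. Then the map $r_{S\bowtie T}$ associated to the matched product $S\bowtie T$ is a solution, and it coincides with the matched product of solutions $r_S\bowtie r_T$, i.e. for all $(a,u),(b,v)\in S\times T$, $$r_{S\bowtie T}((a,u),(b,v))=\left(\left(\alpha_u\lambda_{\bar a}(b),\,\beta_a\lambda_{\bar u}(v)\right),\ \left(\alpha^{-1}_{\overline U}\rho_{\alpha_{\bar u}(b)}(a),\ \beta^{-1}_{\overline A}\rho_{\beta_{\bar a}(v)}(u)\right)\right),$$ where $\bar a=\alpha_u^{-1}(a)$, $\bar u=\beta_a^{-1}(u)$, $A=\alpha_u\lambda_{\bar a}(b)$, $U=\beta_a\lambda_{\bar u}(v)$, $\overline A=\alpha_U^{-1}(A)$, $\overline U=\beta_A^{-1}(U)$.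
   Context: An inverse semigroup is a semigroup $(S,\cdot)$ in which for each $a$ there is a unique $a^{-1}$ with $aa^{-1}a=a$, $a^{-1}aa^{-1}=a^{-1}$. A left inverse semi-brace is a triple $(S,+,\cdot)$ with $(S,+)$ a semigroup, $(S,\cdot)$ an inverse semigroup and $a(b+c)=ab+a(a^{-1}+c)$ for all $a,b,c$. In it set $\lambda_a(b)=a(a^{-1}+b)$, $\rho_b(a)=(a^{-1}+b)^{-1}b$; the map associated to $S$ is $r_S(a,b)=(\lambda_a(b),\rho_b(a))$. A solution is a map $r:X\times X\to X\times X$ with $(r\times\mathrm{id})(\mathrm{id}\times r)(r\times\mathrm{id})=(\mathrm{id}\times r)(r\times\mathrm{id})(\mathrm{id}\times r)$. A matched product system of left inverse semi-braces is a quadruple $(S,T,\alpha,\beta)$ where $S,T$ are left inverse semi-braces, $\alpha:T\to\mathrm{Aut}(S,+)$ is a homomorphism of inverse semigroups from $(T,\cdot)$ into the automorphism group of $(S,+)$, $\beta:S\to\mathrm{Aut}(T,+)$ is a homomorphism of inverse semigroups from $(S,\cdot)$ into the automorphism group of $(T,+)$ (write $\alpha_u=\alpha(u)$, $\beta_a=\beta(a)$, and $\alpha_u^{-1},\beta_a^{-1}$ for the inverse maps), such that for all $a,b\in S$, $u,v\in T$: $\alpha_u(\alpha_u^{-1}(a)\,b)=a\,\alpha_{\beta_a^{-1}(u)}(b)$ and $\beta_a(\beta_a^{-1}(u)\,v)=u\,\beta_{\alpha_u^{-1}(a)}(v)$; and if $\alpha_u(\alpha_u^{-1}(a)\,a)=a$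 and $\beta_a(\beta_a^{-1}(u)\,u)=u$, then $\alpha_u(a)=a$ and $\beta_a(u)=u$. The matched product $S\bowtie T$ is $S\times T$ with $(a,u)+(b,v)=(a+b,u+v)$ and $(a,u)(b,v)=(\alpha_u(\alpha_u^{-1}(a)b),\beta_a(\beta_a^{-1}(u)v))$; it is a left inverse semi-brace, and $r_{S\bowtie T}$ denotes its associated map. *)

(* Defs.v *)
Set Implicit Arguments.
Unset Strict Implicit.

Definition is_inverse_op (X : Type) (mul : X -> X -> X) (inv : X -> X) : Prop :=
  forall x, mul (mul x (inv x)) x = x /\ mul (mul (inv x) x) (inv x) = inv x.

Record lisb (S : Type) := LISB {
  sadd : S -> S -> S;
  smul : S -> S -> S;
  sinv : S -> S;
  sadd_assoc : forall a b c, sadd a (sadd b c) = sadd (sadd a b) c;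
  smul_assoc : forall a b c, smul a (smul b c) = smul (smul a b) c;
  sinv_spec : is_inverse_op smul sinv;
  sinv_unique : forall a b, smul (smul a b) a = a -> smul (smul b a) b = b -> b = sinv a;
  sbrace : forall a b c, smul a (sadd b c) = sadd (smul a b) (smul a (sadd (sinv a) c))
}.

Definition lam_g (X : Type) (add mul : X -> X -> X) (inv : X -> X) (a b : X) : X :=
  mul a (add (inv a) b).
Definition rho_g (X : Type) (add mul : X -> X -> X) (inv : X -> X) (b a : X) : X :=
  mul (inv (add (inv a) b)) b.
Definition rmap_g (X : Type) (add mul : X -> X -> X) (inv : X -> X) (p : X * X) : X * X :=
  (lam_g add mul inv (fst p) (snd p), rho_g add mul inv (snd p) (fst p)).

Definition lamB S (B : lisb S) := lam_g (sadd B) (smul B) (sinv B).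
Definition rhoB S (B : lisb S) := rho_g (sadd B) (smul B) (sinv B).
Definition rB S (B : lisb S) := rmap_g (sadd B) (smul B) (sinv B).

Definition r12 X (r : X * X -> X * X) (t : X * X * X) : X * X * X :=
  let '(x, y, z) := t in let '(x', y') := r (x, y) in (x', y', z).
Definition r23 X (r : X * X -> X * X) (t : X * X * X) : X * X * X :=
  let '(x, y, z) := t in let '(y', z') := r (y, z) in (x, y', z').
Definition is_solution X (r : X * X -> X * X) : Prop :=
  forall t, r12 r (r23 r (r12 r t)) = r23 r (r12 r (r23 r t)).

Definition is_add_aut S (add : S -> S -> S) (f finv : S -> S) : Prop :=
  (forall x, f (finv x) = x) /\ (forall x, finv (f x) = x) /\
  (forall x y, f (add x y) = add (f x) (f y)).

Record mps S T (BS : lisb S) (BT : lisb T) := MPS {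
  alpha : T -> S -> S;
  alpha_inv : T -> S -> S;
  beta : S -> T -> T;
  beta_inv : S -> T -> T;
  alpha_aut : forall u, is_add_aut (sadd BS) (alpha u) (alpha_inv u);
  beta_aut : forall a, is_add_aut (sadd BT) (beta a) (beta_inv a);
  alpha_hom : forall u v x, alpha (smul BT u v) x = alpha u (alpha v x);
  beta_hom : forall a b y, beta (smul BS a b) y = beta a (beta b y);
  mps_cond1 : forall a b u,
    alpha u (smul BS (alpha_inv u a) b) = smul BS a (alpha (beta_inv a u) b);
  mps_cond2 : forall a u v,
    beta a (smul BT (beta_inv a u) v) = smul BT u (beta (alpha_inv u a) v);
  mps_cond3 : forall a u,
    alpha u (smul BS (alpha_inv u a) a) = a ->
    beta a (smul BT (beta_inv a u) u) = u ->
    alpha u a = a /\ beta a u = u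
}.

Definition mp_add S T (BS : lisb S) (BT : lisb T) (x y : S * T) : S * T :=
  (sadd BS (fst x) (fst y), sadd BT (snd x) (snd y)).
Definition mp_mul S T (BS : lisb S) (BT : lisb T) (M : mps BS BT) (x y : S * T) : S * T :=
  (alpha M (snd x) (smul BS (alpha_inv M (snd x) (fst x)) (fst y)),
   beta M (fst x) (smul BT (beta_inv M (fst x) (snd x)) (snd y))).

(* Main.v *)
Require Import Defs.
From Stdlib Require Import Setoid.


Ltac ra B := repeat rewrite <- (smul_assoc B).
Ltac rah B H := repeat rewrite <- (smul_assoc B) in H.


Lemma mul_inv_r {S} (B : lisb S) x : smul B (smul B x (sinv B x)) x = x.
Proof. exact (proj1 (sinv_spec B x)). Qed.
Lemma inv_mul_inv {S} (B : lisb S) x : smul B (smul B (sinv B x) x) (sinv B x) = sinv B x.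
Proof. exact (proj2 (sinv_spec B x)). Qed.
Lemma mir {S} (B : lisb S) x : smul B x (smul B (sinv B x) x) = x.
Proof. rewrite (smul_assoc B). apply mul_inv_r. Qed.
Lemma imi {S} (B : lisb S) x : smul B (sinv B x) (smul B x (sinv B x)) = sinv B x.
Proof. rewrite (smul_assoc B). apply inv_mul_inv. Qed.
Lemma inv_inv {S} (B : lisb S) x : sinv B (sinv B x) = x.
Proof. symmetry. apply sinv_unique; [apply inv_mul_inv | apply mul_inv_r]. Qed.
Lemma inv_idem {S} (B : lisb S) e : smul B e e = e -> sinv B e = e.
Proof. intro He. symmetry. apply sinv_unique; rewrite !He; reflexivity. Qed.
Lemma idem_l {S} (B : lisb S) e z : smul B e e = e -> smul B e (smul B e z) = smul B e z.
Proof. intro He. rewrite (smul_assoc B), He. reflexivity. Qed.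

Lemma idem_comm {S} (B : lisb S) e f :
  smul B e e = e -> smul B f f = f -> smul B e f = smul B f e.
Proof.
  intros He Hf.
  assert (gen : forall e f, smul B e e = e -> smul B f f = f ->
            smul B (smul B e f) (smul B e f) = smul B e f).
  { clear e f He Hf. intros e f He Hf.
    set (x := sinv B (smul B e f)).
    assert (H1 : smul B (smul B (smul B e f) x) (smul B e f) = smul B e f) by apply mul_inv_r.
    assert (H2 : smul B (smul B x (smul B e f)) x = x) by apply inv_mul_inv.
    rah B H1. rah B H2.
    assert (Hx : smul B f (smul B x e) = x).
    { unfold x. apply sinv_unique.
      - ra B. rewrite ?(idem_l B f _ Hf), ?(idem_l B e _ He). exact H1.
      - ra B. rewrite ?(idem_l B f _ Hf), ?(idem_l B e _ He).
        replace (smul B (sinv B (smul B e f)) (smul B e (smul B f (smul B (sinv B (smul B e f)) e))))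
          with (smul B (smul B (sinv B (smul B e f)) (smul B e (smul B f (sinv B (smul B e f))))) e) by (ra B; reflexivity).
        fold x. rewrite H2. reflexivity. }
    assert (Hxx : smul B x x = x).
    { pattern x at 1 2 3. rewrite <- Hx. ra B.
      replace (smul B x (smul B e (smul B f (smul B x e))))
        with (smul B (smul B x (smul B e (smul B f x))) e) by (ra B; reflexivity).
      rewrite H2. reflexivity. }
    assert (Hxi : sinv B x = x) by (apply inv_idem; exact Hxx).
    assert (Hef : smul B e f = x).
    { rewrite <- Hxi. apply sinv_unique; ra B; [exact H2 | exact H1]. }
    rewrite Hef. exact Hxx. }
  assert (E1 := gen e f He Hf). assert (E2 := gen f e Hf He).
  rah B E1. rah B E2.
  transitivity (sinv B (smul B e f)).
  - symmetry. apply inv_idem. ra B. exact E1.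
  - symmetry. apply sinv_unique.
    + ra B. rewrite ?(idem_l B f _ Hf), ?(idem_l B e _ He). exact E1.
    + ra B. rewrite ?(idem_l B f _ Hf), ?(idem_l B e _ He). exact E2.
Qed.

Lemma idem_xxi {S} (B : lisb S) x : smul B (smul B x (sinv B x)) (smul B x (sinv B x)) = smul B x (sinv B x).
Proof. rewrite (smul_assoc B), mul_inv_r. reflexivity. Qed.
Lemma idem_xix {S} (B : lisb S) x : smul B (smul B (sinv B x) x) (smul B (sinv B x) x) = smul B (sinv B x) x.
Proof. rewrite (smul_assoc B), inv_mul_inv. reflexivity. Qed.

Lemma mir_l {S} (B : lisb S) x z : smul B x (smul B (sinv B x) (smul B x z)) = smul B x z.
Proof. rewrite (smul_assoc B (sinv B x)), (smul_assoc B x), mir. reflexivity. Qed.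
Lemma imi_l {S} (B : lisb S) x z : smul B (sinv B x) (smul B x (smul B (sinv B x) z)) = smul B (sinv B x) z.
Proof. rewrite (smul_assoc B x), (smul_assoc B (sinv B x)), imi. reflexivity. Qed.

Lemma inv_mul {S} (B : lisb S) x y : sinv B (smul B x y) = smul B (sinv B y) (sinv B x).
Proof.
  symmetry. apply sinv_unique.
  - ra B. 
    replace (smul B y (smul B (sinv B y) (smul B (sinv B x) (smul B x y))))
      with (smul B (smul B (smul B y (sinv B y)) (smul B (sinv B x) x)) y) by (ra B; reflexivity).
    rewrite (idem_comm B _ _ (idem_xxi B y) (idem_xix B x)). ra B.
    rewrite mir, mir_l. reflexivity.
  - ra B.
    replace (smul B (sinv B y) (smul B (sinv B x) (smul B x (smul B y (smul B (sinv B y) (sinv B x))))))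
      with (smul B (sinv B y) (smul B (smul B (smul B (sinv B x) x) (smul B y (sinv B y))) (sinv B x))) by (ra B; reflexivity).
    rewrite (idem_comm B _ _ (idem_xix B x) (idem_xxi B y)). ra B.
    rewrite imi, imi_l. reflexivity.
Qed.

Lemma idem_mul {S} (B : lisb S) e f : smul B e e = e -> smul B f f = f ->
  smul B (smul B e f) (smul B e f) = smul B e f.
Proof.
  intros He Hf. ra B. rewrite (smul_assoc B f e f), <- (idem_comm B e f He Hf).
  ra B. rewrite (idem_l B e _ He), Hf. reflexivity.
Qed.


Definition swapM {S T} {BS : lisb S} {BT : lisb T} (M : mps BS BT) : mps BT BS :=
  {| alpha := beta M; alpha_inv := beta_inv M; beta := alpha M; beta_inv := alpha_inv M;
     alpha_aut := beta_aut M; beta_aut := alpha_aut M;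
     alpha_hom := beta_hom M; beta_hom := alpha_hom M;
     mps_cond1 := fun a b u => mps_cond2 M u a b;
     mps_cond2 := fun a u v => mps_cond1 M u v a;
     mps_cond3 := fun a u H1 H2 => let (X, Y) := @mps_cond3 _ _ _ _ M u a H2 H1 in conj Y X |}.


Lemma aK {S T} {BS : lisb S} {BT : lisb T} (M : mps BS BT) u x : alpha M u (alpha_inv M u x) = x.
Proof. exact (proj1 (alpha_aut M u) x). Qed.
Lemma aK' {S T} {BS : lisb S} {BT : lisb T} (M : mps BS BT) u x : alpha_inv M u (alpha M u x) = x.
Proof. exact (proj1 (proj2 (alpha_aut M u)) x). Qed.
Lemma a_add {S T} {BS : lisb S} {BT : lisb T} (M : mps BS BT) u x y :
  alpha M u (sadd BS x y) = sadd BS (alpha M u x) (alpha M u y).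
Proof. exact (proj2 (proj2 (alpha_aut M u)) x y). Qed.
Lemma a_inj {S T} {BS : lisb S} {BT : lisb T} (M : mps BS BT) u x y :
  alpha M u x = alpha M u y -> x = y.
Proof. intro H. rewrite <- (aK' M u x), H. apply aK'. Qed.
Lemma a_idem {S T} {BS : lisb S} {BT : lisb T} (M : mps BS BT) f x :
  smul BT f f = f -> alpha M f x = x.
Proof. intro Hf. apply (a_inj M f). rewrite <- alpha_hom, Hf. reflexivity. Qed.
Lemma a_inv_eq {S T} {BS : lisb S} {BT : lisb T} (M : mps BS BT) u x :
  alpha_inv M u x = alpha M (sinv BT u) x.
Proof.
  assert (H : forall y, alpha M (sinv BT u) (alpha M u y) = y).
  { intro y. apply (a_inj M u). rewrite <- !alpha_hom. rewrite mul_inv_r. reflexivity. }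
  rewrite <- (aK M u x) at 2. rewrite H. reflexivity.
Qed.
Lemma ai_mul {S T} {BS : lisb S} {BT : lisb T} (M : mps BS BT) u v x :
  alpha_inv M (smul BT u v) x = alpha_inv M v (alpha_inv M u x).
Proof.
  apply (a_inj M (smul BT u v)). rewrite aK, alpha_hom, !aK. reflexivity.
Qed.
Lemma ai_idem {S T} {BS : lisb S} {BT : lisb T} (M : mps BS BT) f x :
  smul BT f f = f -> alpha_inv M f x = x.
Proof. intro Hf. rewrite a_inv_eq, inv_idem by exact Hf. apply a_idem, Hf. Qed.

Lemma bK {S T} {BS : lisb S} {BT : lisb T} (M : mps BS BT) a y : beta M a (beta_inv M a y) = y.
Proof. exact (aK (swapM M) a y). Qed.
Lemma bK' {S T} {BS : lisb S} {BT : lisb T} (M : mps BS BT) a y : beta_inv M a (beta M a y) = y.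
Proof. exact (aK' (swapM M) a y). Qed.
Lemma b_idem {S T} {BS : lisb S} {BT : lisb T} (M : mps BS BT) e y :
  smul BS e e = e -> beta M e y = y.
Proof. exact (a_idem (swapM M) e y). Qed.
Lemma bi_idem {S T} {BS : lisb S} {BT : lisb T} (M : mps BS BT) e y :
  smul BS e e = e -> beta_inv M e y = y.
Proof. exact (ai_idem (swapM M) e y). Qed.
Lemma bi_mul {S T} {BS : lisb S} {BT : lisb T} (M : mps BS BT) a b y :
  beta_inv M (smul BS a b) y = beta_inv M b (beta_inv M a y).
Proof. exact (ai_mul (swapM M) a b y). Qed.
Lemma b_inv_eq {S T} {BS : lisb S} {BT : lisb T} (M : mps BS BT) a y :
  beta_inv M a y = beta M (sinv BS a) y.
Proof. exact (a_inv_eq (swapM M) a y). Qed.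

Lemma I1 {S T} {BS : lisb S} {BT : lisb T} (M : mps BS BT) u x y :
  alpha M u (smul BS x y) =
  smul BS (alpha M u x) (alpha M (beta_inv M (alpha M u x) u) y).
Proof. pose proof (mps_cond1 M (alpha M u x) y u) as H. rewrite aK' in H. exact H. Qed.

Lemma LM {S T} {BS : lisb S} {BT : lisb T} (M : mps BS BT) u e c :
  smul BS e e = e -> alpha M u (smul BS e c) = smul BS (alpha M u e) (alpha M u c).
Proof.
  intro He. pose proof (mps_cond1 M e (alpha M u c) (sinv BT u)) as H.
  rewrite (bi_idem M e _ He) in H.
  rewrite !a_inv_eq, inv_inv in H. rewrite <- !a_inv_eq, aK' in H.
  rewrite <- H, aK. reflexivity.
Qed.

Lemma C2 {S T} {BS : lisb S} {BT : lisb T} (M : mps BS BT) u e :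
  smul BS e e = e -> smul BS (alpha M u e) (alpha M u e) = alpha M u e.
Proof. intro He. rewrite <- LM, He by exact He. reflexivity. Qed.

Lemma K1 {S T} {BS : lisb S} {BT : lisb T} (M : mps BS BT) u x :
  sinv BS (alpha M u x) = alpha M (beta_inv M (alpha M u x) u) (sinv BS x).
Proof.
  set (a := alpha M u x). set (s := beta_inv M a u). set (c := alpha M s (sinv BS x)).
  assert (Hac : smul BS a c = alpha M u (smul BS x (sinv BS x))) by (unfold c, s, a; rewrite I1; reflexivity).
  symmetry. apply sinv_unique.
  - rewrite Hac. unfold a. rewrite <- LM by apply idem_xxi. rewrite mul_inv_r. reflexivity.
  - rewrite <- (smul_assoc BS). transitivity (smul BS c (alpha M u (smul BS x (sinv BS x)))); [f_equal; exact Hac|].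
    assert (E : beta_inv M (alpha M s (sinv BS x)) s = u).
    { unfold s. rewrite <- bi_mul. change (beta_inv M (smul BS a c) u = u). rewrite Hac. apply bi_idem. apply C2, idem_xxi. }
    pose proof (I1 M s (sinv BS x) (smul BS x (sinv BS x))) as H.
    rewrite E, imi in H. fold c in H. rewrite <- H. reflexivity.
Qed.


Lemma D1 {S T} {BS : lisb S} {BT : lisb T} (M : mps BS BT) Z w y :
  beta_inv M Z (smul BT w y) = smul BT (beta_inv M Z w) (beta_inv M (alpha_inv M w Z) y).
Proof.
  pose proof (mps_cond2 M Z w (beta_inv M (alpha_inv M w Z) y)) as H.
  rewrite bK in H. rewrite <- H, bK'. reflexivity.
Qed.

Lemma MULform {S T} {BS : lisb S} {BT : lisb T} (M : mps BS BT) a u b v :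
  mp_mul M (a, u) (b, v) =
  (smul BS a (alpha M (beta_inv M a u) b), smul BT u (beta M (alpha_inv M u a) v)).
Proof. unfold mp_mul; simpl. rewrite mps_cond1, mps_cond2. reflexivity. Qed.

Lemma ZS {S T} {BS : lisb S} {BT : lisb T} (M : mps BS BT) a u b v :
  beta_inv M (smul BS a (alpha M (beta_inv M a u) b)) (smul BT u (beta M (alpha_inv M u a) v))
  = smul BT (beta_inv M (alpha M (beta_inv M a u) b) (beta_inv M a u)) (beta_inv M b v).
Proof.
  rewrite <- (mps_cond2 M a u v). rewrite bi_mul, bK', D1, aK'. reflexivity.
Qed.

Definition sw {S T} (p : S * T) : T * S := (snd p, fst p).

Lemma p_assoc_fst {S T} {BS : lisb S} {BT : lisb T} (M : mps BS BT) p q r :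
  fst (mp_mul M (mp_mul M p q) r) = fst (mp_mul M p (mp_mul M q r)).
Proof.
  destruct p as [a u], q as [b v], r as [c w].
  rewrite !MULform. simpl. rewrite ZS, alpha_hom, I1. symmetry. apply smul_assoc.
Qed.

Lemma p_assoc {S T} {BS : lisb S} {BT : lisb T} (M : mps BS BT) p q r :
  mp_mul M (mp_mul M p q) r = mp_mul M p (mp_mul M q r).
Proof.
  apply injective_projections.
  - apply p_assoc_fst.
  - exact (p_assoc_fst (swapM M) (sw p) (sw q) (sw r)).
Qed.

Definition pstar {S T} {BS : lisb S} {BT : lisb T} (M : mps BS BT) (p : S * T) : S * T :=
  (sinv BS (alpha_inv M (snd p) (fst p)), sinv BT (beta_inv M (fst p) (snd p))).

Lemma p_idem_left {S T} {BS : lisb S} {BT : lisb T} (M : mps BS BT) e f b v :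
  smul BS e e = e -> smul BT f f = f -> mp_mul M (e, f) (b, v) = (smul BS e b, smul BT f v).
Proof.
  intros He Hf. unfold mp_mul; simpl.
  rewrite (ai_idem M f _ Hf), (a_idem M f _ Hf), (bi_idem M e _ He), (b_idem M e _ He). reflexivity.
Qed.

Lemma K1' {S T} {BS : lisb S} {BT : lisb T} (M : mps BS BT) u a :
  sinv BS a = alpha M (beta_inv M a u) (sinv BS (alpha_inv M u a)).
Proof. pose proof (K1 M u (alpha_inv M u a)) as H. rewrite aK in H. exact H. Qed.

Lemma A1_fst {S T} {BS : lisb S} {BT : lisb T} (M : mps BS BT) a u :
  fst (mp_mul M (a, u) (pstar M (a, u))) = smul BS a (sinv BS a).
Proof. unfold mp_mul, pstar; simpl. rewrite I1, aK, <- K1'. reflexivity. Qed.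

Lemma A1 {S T} {BS : lisb S} {BT : lisb T} (M : mps BS BT) a u :
  mp_mul M (a, u) (pstar M (a, u)) = (smul BS a (sinv BS a), smul BT u (sinv BT u)).
Proof.
  apply injective_projections.
  - apply A1_fst.
  - exact (A1_fst (swapM M) u a).
Qed.

Lemma a_sinv_K {S T} {BS : lisb S} {BT : lisb T} (M : mps BS BT) w z :
  alpha M (sinv BT w) (alpha M w z) = z.
Proof. rewrite <- a_inv_eq. apply aK'. Qed.

Lemma A2_fst {S T} {BS : lisb S} {BT : lisb T} (M : mps BS BT) a u :
  fst (mp_mul M (pstar M (a, u)) (a, u)) =
  smul BS (sinv BS (alpha_inv M u a)) (alpha_inv M u a).
Proof.
  unfold mp_mul, pstar; simpl.
  rewrite a_inv_eq, inv_inv, <- K1'.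
  assert (E : alpha M (beta_inv M a u) (smul BS (sinv BS (alpha_inv M u a)) (alpha_inv M u a))
              = smul BS (sinv BS a) a).
  { rewrite I1, <- K1', <- bi_mul, bi_idem by apply idem_xxi. rewrite aK. reflexivity. }
  rewrite <- E. apply a_sinv_K.
Qed.

Lemma A2 {S T} {BS : lisb S} {BT : lisb T} (M : mps BS BT) a u :
  mp_mul M (pstar M (a, u)) (a, u) =
  (smul BS (sinv BS (alpha_inv M u a)) (alpha_inv M u a),
   smul BT (sinv BT (beta_inv M a u)) (beta_inv M a u)).
Proof.
  apply injective_projections.
  - apply A2_fst.
  - exact (A2_fst (swapM M) u a).
Qed.

Lemma pstar_spec {S T} {BS : lisb S} {BT : lisb T} (M : mps BS BT) :
  is_inverse_op (mp_mul M) (pstar M).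
Proof.
  intros [a u]. split.
  - rewrite A1, p_idem_left by apply idem_xxi. rewrite !mul_inv_r. reflexivity.
  - rewrite A2. unfold pstar. simpl.
    rewrite p_idem_left by apply idem_xix. rewrite !inv_mul_inv. reflexivity.
Qed.

Lemma p_idem {S T} {BS : lisb S} {BT : lisb T} (M : mps BS BT) a u :
  mp_mul M (a, u) (a, u) = (a, u) -> smul BS a a = a /\ smul BT u u = u.
Proof.
  intro H. unfold mp_mul in H; simpl in H. injection H as H1 H2.
  destruct (mps_cond3 H1 H2) as [Ha Hu].
  assert (Ea : alpha_inv M u a = a) by (rewrite <- Ha at 1; apply aK').
  assert (Eu : beta_inv M a u = u) by (rewrite <- Hu at 1; apply bK').
  rewrite Ea in H1. rewrite Eu in H2. split.
  - apply (a_inj M u). rewrite H1, Ha. reflexivity.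
  - apply (a_inj (swapM M) a). exact (eq_trans H2 (eq_sym Hu)).
Qed.

Lemma p_idem_comm {S T} {BS : lisb S} {BT : lisb T} (M : mps BS BT) p q :
  mp_mul M p p = p -> mp_mul M q q = q -> mp_mul M p q = mp_mul M q p.
Proof.
  destruct p as [e f], q as [e2 f2]. intros Hp Hq.
  destruct (p_idem M _ _ Hp) as [He Hf]. destruct (p_idem M _ _ Hq) as [He2 Hf2].
  rewrite !p_idem_left by assumption.
  rewrite (idem_comm BS e e2), (idem_comm BT f f2) by assumption. reflexivity.
Qed.

Lemma inv_unique_gen {X} (mul : X -> X -> X)
  (assoc : forall a b c, mul (mul a b) c = mul a (mul b c))
  (icomm : forall e f, mul e e = e -> mul f f = f -> mul e f = mul f e) p q r :
  mul (mul p q) p = p -> mul (mul q p) q = q ->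
  mul (mul p r) p = p -> mul (mul r p) r = r -> q = r.
Proof.
  intros H1 H2 H3 H4.
  assert (Iqp : mul (mul q p) (mul q p) = mul q p) by (rewrite <- assoc, H2; reflexivity).
  assert (Irp : mul (mul r p) (mul r p) = mul r p) by (rewrite <- assoc, H4; reflexivity).
  assert (Ipq : mul (mul p q) (mul p q) = mul p q) by (rewrite <- (assoc (mul p q) p q), H1; reflexivity).
  assert (Ipr : mul (mul p r) (mul p r) = mul p r) by (rewrite <- (assoc (mul p r) p r), H3; reflexivity).
  assert (Epq : mul p q = mul p r).
  { assert (A : mul p q = mul (mul p r) (mul p q)) by (rewrite <- (assoc (mul p r) p q), H3; reflexivity).
    assert (B : mul p r = mul (mul p q) (mul p r)) by (rewrite <- (assoc (mul p q) p r), H1; reflexivity).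
    rewrite A, (icomm _ _ Ipr Ipq), <- B. reflexivity. }
  assert (Eqp : mul q p = mul r p).
  { assert (A : mul q p = mul (mul q p) (mul r p)) by (rewrite (assoc q p (mul r p)), <- (assoc p r p), H3; reflexivity).
    assert (B : mul r p = mul (mul r p) (mul q p)) by (rewrite (assoc r p (mul q p)), <- (assoc p q p), H1; reflexivity).
    rewrite A, (icomm _ _ Iqp Irp), <- B. reflexivity. }
  rewrite <- H2, Eqp, assoc, Epq, <- assoc, H4. reflexivity.
Qed.


Lemma pinv_eq {S T} {BS : lisb S} {BT : lisb T} (M : mps BS BT) (pinv : S * T -> S * T) :
  is_inverse_op (mp_mul M) pinv -> forall p, pinv p = pstar M p.
Proof.
  intros H p.
  apply (inv_unique_gen (mp_mul M) (p_assoc M) (p_idem_comm M) p).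
  - exact (proj1 (H p)).
  - exact (proj2 (H p)).
  - exact (proj1 (pstar_spec M p)).
  - exact (proj2 (pstar_spec M p)).
Qed.

Lemma C1 {S T} {BS : lisb S} {BT : lisb T} (M : mps BS BT) x f y :
  smul BT f f = f -> alpha M (beta_inv M x f) y = y.
Proof.
  intro Hf. rewrite b_inv_eq. apply a_idem. exact (C2 (swapM M) (sinv BS x) f Hf).
Qed.

Lemma TL {S T} {BS : lisb S} {BT : lisb T} (M : mps BS BT) w x y :
  alpha M w (lamB BS x y) =
  lamB BS (alpha M w x) (alpha M (beta_inv M (alpha M w x) w) y).
Proof. unfold lamB, lam_g. rewrite I1, a_add, <- K1. reflexivity. Qed.

Lemma TR {S T} {BS : lisb S} {BT : lisb T} (M : mps BS BT) w x y :
  rhoB BS (alpha M (beta_inv M (alpha M w x) w) y) (alpha M w x) =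
  alpha M (beta_inv M (alpha M (beta_inv M (alpha M w x) w) (sadd BS (sinv BS x) y))
                      (beta_inv M (alpha M w x) w))
    (rhoB BS y x).
Proof.
  unfold rhoB, rho_g. rewrite (K1 M w x), <- a_add.
  set (g := beta_inv M (alpha M w x) w). set (Z := sadd BS (sinv BS x) y).
  rewrite (K1 M g Z).
  rewrite I1. rewrite <- K1.
  rewrite <- (bi_mul M (alpha M g Z) (sinv BS (alpha M g Z)) g), bi_idem by apply idem_xxi.
  reflexivity.
Qed.

Definition lamS {S T} {BS : lisb S} {BT : lisb T} (M : mps BS BT) a u b (v : T) : S :=
  alpha M u (lamB BS (alpha_inv M u a) b).
Definition rhoS {S T} {BS : lisb S} {BT : lisb T} (M : mps BS BT) a u b v : S :=
  alpha_inv M (beta_inv M (lamS M a u b v) (lamS (swapM M) u a v b))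
    (rhoB BS (alpha M (beta_inv M a u) b) a).
Definition F {S T} {BS : lisb S} {BT : lisb T} (M : mps BS BT) (t : (S * T) * (S * T)) :=
  let '((a, u), (b, v)) := t in
  ((lamS M a u b v, lamS (swapM M) u a v b), (rhoS M a u b v, rhoS (swapM M) u a v b)).
Definition rP {S T} {BS : lisb S} {BT : lisb T} (M : mps BS BT) :=
  rmap_g (mp_add BS BT) (mp_mul M) (pstar M).

Lemma rho_fst {S T} {BS : lisb S} {BT : lisb T} (M : mps BS BT) X Y b v :
  fst (mp_mul M (pstar M (X, Y)) (b, v)) =
  alpha_inv M (beta_inv M X Y) (smul BS (sinv BS X) b).
Proof.
  unfold mp_mul, pstar; simpl.
  rewrite (a_inv_eq M (sinv BT (beta_inv M X Y))), inv_inv, <- K1'.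
  rewrite <- a_inv_eq. reflexivity.
Qed.

Lemma Ubar_eq {S T} {BS : lisb S} {BT : lisb T} (M : mps BS BT) a u b v :
  beta_inv M (lamS M a u b v) (lamS (swapM M) u a v b) =
  smul BT (beta_inv M (alpha M (beta_inv M a u) (sadd BS (sinv BS (alpha_inv M u a)) b)) (beta_inv M a u))
          (beta_inv M (sadd BS (sinv BS (alpha_inv M u a)) b) (sadd BT (sinv BT (beta_inv M a u)) v)).
Proof.
  unfold lamS, lamB, lam_g. simpl.
  rewrite I1, aK, bi_mul, bK', D1, aK'. reflexivity.
Qed.

Lemma rP_snd_fst {S T} {BS : lisb S} {BT : lisb T} (M : mps BS BT) a u b v :
  fst (snd (rP M ((a, u), (b, v)))) = rhoS M a u b v.
Proof.
  change (fst (mp_mul M (pstar M (sadd BS (sinv BS (alpha_inv M u a)) b,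
                                  sadd BT (sinv BT (beta_inv M a u)) v)) (b, v)) = rhoS M a u b v).
  rewrite rho_fst. unfold rhoS. rewrite Ubar_eq.
  pose proof (TR M u (alpha_inv M u a) b) as H. rewrite aK in H. rewrite H.
  rewrite ai_mul, aK'. reflexivity.
Qed.

Lemma rP_F {S T} {BS : lisb S} {BT : lisb T} (M : mps BS BT) t : rP M t = F M t.
Proof.
  destruct t as [[a u] [b v]].
  apply injective_projections; [reflexivity|].
  apply injective_projections.
  - apply rP_snd_fst.
  - exact (rP_snd_fst (swapM M) u a v b).
Qed.


Definition tau {S T} {BS : lisb S} {BT : lisb T} (M : mps BS BT) (p y : S * T) : S * T :=
  (alpha M (beta_inv M (fst p) (snd p)) (fst y), beta M (alpha_inv M (snd p) (fst p)) (snd y)).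

Definition RR {S T} (BS : lisb S) (BT : lisb T) (t : (S * T) * (S * T)) :=
  ((fst (rB BS (fst (fst t), fst (snd t))), fst (rB BT (snd (fst t), snd (snd t)))),
   (snd (rB BS (fst (fst t), fst (snd t))), snd (rB BT (snd (fst t), snd (snd t))))).

Lemma M3 {S T} {BS : lisb S} {BT : lisb T} (M : mps BS BT) a u b v :
  lamS M a u b v = lamB BS a (alpha M (beta_inv M a u) b).
Proof. unfold lamS. rewrite TL, aK. reflexivity. Qed.

Lemma Ta1_S {S T} {BS : lisb S} {BT : lisb T} (M : mps BS BT) a u b v :
  lamS M a u b v = fst (rB BS (a, alpha M (beta_inv M a u) b)).
Proof. rewrite M3. reflexivity. Qed.

Lemma Ta1 {S T} {BS : lisb S} {BT : lisb T} (M : mps BS BT) p q :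
  fst (F M (p, q)) = fst (RR BS BT (p, tau M p q)).
Proof.
  destruct p as [a u], q as [b v].
  apply injective_projections.
  - apply Ta1_S.
  - exact (Ta1_S (swapM M) u a v b).
Qed.

Lemma Ta2_S {S T} {BS : lisb S} {BT : lisb T} (M : mps BS BT) a u b v :
  alpha M (beta_inv M (lamS M a u b v) (lamS (swapM M) u a v b)) (rhoS M a u b v)
  = snd (rB BS (a, alpha M (beta_inv M a u) b)).
Proof. unfold rhoS. rewrite aK. reflexivity. Qed.

Lemma Ta2 {S T} {BS : lisb S} {BT : lisb T} (M : mps BS BT) p q :
  tau M (fst (F M (p, q))) (snd (F M (p, q))) = snd (RR BS BT (p, tau M p q)).
Proof.
  destruct p as [a u], q as [b v].
  apply injective_projections.
  - apply Ta2_S.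
  - exact (Ta2_S (swapM M) u a v b).
Qed.

Lemma Tb_S {S T} {BS : lisb S} {BT : lisb T} (M : mps BS BT) a u e f b v c :
  smul BS e e = e -> smul BT f f = f ->
  alpha M (beta_inv M (fst (mp_mul M (mp_mul M (a, u) (e, f)) (b, v)))
                      (snd (mp_mul M (mp_mul M (a, u) (e, f)) (b, v)))) c =
  alpha M (beta_inv M (fst (mp_mul M (a, u) (b, v))) (snd (mp_mul M (a, u) (b, v)))) c.
Proof.
  intros He Hf. rewrite !MULform. simpl. rewrite !ZS.
  rewrite (bi_idem M (alpha M (beta_inv M a u) e)) by (apply C2; exact He).
  rewrite (bi_idem M e) by exact He.
  rewrite (alpha_hom M (beta_inv M a u) f b), (a_idem M f b Hf).
  rewrite D1, aK'. rewrite !alpha_hom. rewrite (C1 M b f) by exact Hf. reflexivity.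
Qed.

Lemma Tb {S T} {BS : lisb S} {BT : lisb T} (M : mps BS BT) p q z :
  tau M (mp_mul M (fst (F M (p, q))) (snd (F M (p, q)))) z = tau M (mp_mul M p q) z.
Proof.
  rewrite <- rP_F. destruct p as [a u], q as [b v].
  unfold rP, rmap_g, lam_g, rho_g. cbn [fst snd].
  set (x := mp_add BS BT (pstar M (a, u)) (b, v)).
  rewrite <- p_assoc, (p_assoc M (a, u) x (pstar M x)).
  replace x with (sadd BS (sinv BS (alpha_inv M u a)) b, sadd BT (sinv BT (beta_inv M a u)) v) by reflexivity.
  rewrite A1. destruct z as [c w].
  apply injective_projections.
  - apply Tb_S; apply idem_xxi.
  - exact (Tb_S (swapM M) u a _ _ v b w (idem_xxi _ _) (idem_xxi _ _)).
Qed.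

Lemma Tc_S {S T} {BS : lisb S} {BT : lisb T} (M : mps BS BT) a u b v c w :
  alpha M (beta_inv M a u) (lamS M b v c w) =
  fst (rB BS (alpha M (beta_inv M a u) b,
              alpha M (beta_inv M (fst (mp_mul M (a, u) (b, v))) (snd (mp_mul M (a, u) (b, v)))) c)).
Proof.
  rewrite M3, TL, MULform. cbn [fst snd]. rewrite ZS, alpha_hom. reflexivity.
Qed.

Lemma Tc {S T} {BS : lisb S} {BT : lisb T} (M : mps BS BT) p1 p2 p3 :
  tau M p1 (fst (F M (p2, p3))) = fst (RR BS BT (tau M p1 p2, tau M (mp_mul M p1 p2) p3)).
Proof.
  destruct p1 as [a u], p2 as [b v], p3 as [c w].
  apply injective_projections.
  - apply Tc_S.
  - exact (Tc_S (swapM M) u a v b w c).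
Qed.

Lemma Td_S {S T} {BS : lisb S} {BT : lisb T} (M : mps BS BT) a u b v c w :
  alpha M (beta_inv M (fst (mp_mul M (a, u) (lamS M b v c w, lamS (swapM M) v b w c)))
                      (snd (mp_mul M (a, u) (lamS M b v c w, lamS (swapM M) v b w c))))
    (rhoS M b v c w) =
  snd (rB BS (alpha M (beta_inv M a u) b,
              alpha M (beta_inv M (fst (mp_mul M (a, u) (b, v))) (snd (mp_mul M (a, u) (b, v)))) c)).
Proof.
  rewrite !MULform. cbn [fst snd]. rewrite !ZS.
  set (m1 := lamS M b v c w). set (m2 := lamS (swapM M) v b w c).
  unfold rhoS. fold m1 m2.
  rewrite (alpha_hom M (beta_inv M (alpha M (beta_inv M a u) m1) (beta_inv M a u)) (beta_inv M m1 m2)).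
  rewrite aK.
  change (snd (rB BS ?x)) with (rhoB BS (snd x) (fst x)). cbn [fst snd].
  rewrite alpha_hom. rewrite TR.
  unfold m1. rewrite M3. unfold lamB at 1, lam_g at 1. rewrite I1, bi_mul. reflexivity.
Qed.

Lemma Td {S T} {BS : lisb S} {BT : lisb T} (M : mps BS BT) p1 p2 p3 :
  tau M (mp_mul M p1 (fst (F M (p2, p3)))) (snd (F M (p2, p3))) =
  snd (RR BS BT (tau M p1 p2, tau M (mp_mul M p1 p2) p3)).
Proof.
  destruct p1 as [a u], p2 as [b v], p3 as [c w].
  apply injective_projections.
  - apply Td_S.
  - exact (Td_S (swapM M) u a v b w c).
Qed.


Lemma r12_eq {X} (r : X * X -> X * X) x y z :
  r12 r (x, y, z) = (fst (r (x, y)), snd (r (x, y)), z).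
Proof. unfold r12. destruct (r (x, y)); reflexivity. Qed.
Lemma r23_eq {X} (r : X * X -> X * X) x y z :
  r23 r (x, y, z) = (x, fst (r (y, z)), snd (r (y, z))).
Proof. unfold r23. destruct (r (y, z)); reflexivity. Qed.

Definition T3 {S T} {BS : lisb S} {BT : lisb T} (M : mps BS BT) (t : (S * T) * (S * T) * (S * T)) :=
  (fst (fst t), tau M (fst (fst t)) (snd (fst t)),
   tau M (mp_mul M (fst (fst t)) (snd (fst t))) (snd t)).

Lemma L12 {S T} {BS : lisb S} {BT : lisb T} (M : mps BS BT) t :
  T3 M (r12 (F M) t) = r12 (RR BS BT) (T3 M t).
Proof.
  destruct t as [[x y] z]. rewrite r12_eq. unfold T3. cbn [fst snd]. rewrite r12_eq.
  rewrite Tb, Ta2, Ta1. reflexivity.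
Qed.

Lemma L23 {S T} {BS : lisb S} {BT : lisb T} (M : mps BS BT) t :
  T3 M (r23 (F M) t) = r23 (RR BS BT) (T3 M t).
Proof.
  destruct t as [[x y] z]. rewrite r23_eq. unfold T3. cbn [fst snd]. rewrite r23_eq.
  rewrite Tc, Td. reflexivity.
Qed.

Lemma RR_sol {S T} (BS : lisb S) (BT : lisb T) :
  is_solution (rB BS) -> is_solution (rB BT) -> is_solution (RR BS BT).
Proof.
  intros HS HT [[[a u] [b v]] [c w]].
  specialize (HS (a, b, c)). specialize (HT (u, v, w)).
  cbn [r12 r23 rB rmap_g fst snd] in HS, HT.
  cbn [r12 r23 RR rB rmap_g fst snd].
  injection HS as H1 H2 H3. injection HT as G1 G2 G3.
  rewrite H1, H2, H3, G1, G2, G3. reflexivity.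
Qed.

Lemma tau_inj {S T} {BS : lisb S} {BT : lisb T} (M : mps BS BT) p y1 y2 :
  tau M p y1 = tau M p y2 -> y1 = y2.
Proof.
  destruct y1 as [b1 v1], y2 as [b2 v2]. unfold tau; cbn [fst snd]. intro H.
  injection H as H1 H2. apply a_inj in H1. apply (a_inj (swapM M)) in H2. subst. reflexivity.
Qed.

Lemma T3_inj {S T} {BS : lisb S} {BT : lisb T} (M : mps BS BT) t1 t2 :
  T3 M t1 = T3 M t2 -> t1 = t2.
Proof.
  destruct t1 as [[x1 y1] z1], t2 as [[x2 y2] z2]. unfold T3; cbn [fst snd]. intro H.
  pose proof (f_equal (fun t => fst (fst t)) H) as H1.
  pose proof (f_equal (fun t => snd (fst t)) H) as H2.
  pose proof (f_equal (fun t => snd t) H) as H3. cbn beta in H1, H2, H3. cbn [fst snd] in H1, H2, H3.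
  subst x2. apply tau_inj in H2. subst y2.
  apply tau_inj in H3. subst z2. reflexivity.
Qed.

Lemma F_sol {S T} {BS : lisb S} {BT : lisb T} (M : mps BS BT) :
  is_solution (rB BS) -> is_solution (rB BT) -> is_solution (F M).
Proof.
  intros HS HT t. apply (T3_inj M).
  repeat (rewrite L12 || rewrite L23). apply (RR_sol BS BT HS HT).
Qed.

Lemma r12_ext {X} (r r' : X * X -> X * X) :
  (forall p, r p = r' p) -> forall t, r12 r t = r12 r' t.
Proof. intros H [[x y] z]. rewrite !r12_eq, H. reflexivity. Qed.
Lemma r23_ext {X} (r r' : X * X -> X * X) :
  (forall p, r p = r' p) -> forall t, r23 r t = r23 r' t.
Proof. intros H [[x y] z]. rewrite !r23_eq, H. reflexivity. Qed.

Lemma sol_ext {X} (r r' : X * X -> X * X) :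
  (forall p, r p = r' p) -> is_solution r' -> is_solution r.
Proof.
  intros H Hs t.
  repeat (rewrite (r12_ext r r' H) || rewrite (r23_ext r r' H)). apply Hs.
Qed.

Lemma rmap_ext {S T} {BS : lisb S} {BT : lisb T} (M : mps BS BT) (pinv : S * T -> S * T) :
  is_inverse_op (mp_mul M) pinv ->
  forall t, rmap_g (mp_add BS BT) (mp_mul M) pinv t = F M t.
Proof.
  intros H t. rewrite <- rP_F. unfold rP, rmap_g, lam_g, rho_g.
  rewrite !(pinv_eq M pinv H). reflexivity.
Qed.

Theorem theorem28 (S T : Type) (BS : lisb S) (BT : lisb T) (M : mps BS BT) :
  is_solution (rB BS) -> is_solution (rB BT) ->
  forall pinv : S * T -> S * T,
    is_inverse_op (mp_mul M) pinv ->
    is_solution (rmap_g (mp_add BS BT) (mp_mul M) pinv) /\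
    (forall (a b : S) (u v : T),
      let abar := alpha_inv M u a in
      let ubar := beta_inv M a u in
      let A := alpha M u (lamB BS abar b) in
      let U := beta M a (lamB BT ubar v) in
      let Abar := alpha_inv M U A in
      let Ubar := beta_inv M A U in
      rmap_g (mp_add BS BT) (mp_mul M) pinv ((a, u), (b, v)) =
      ((A, U),
       (alpha_inv M Ubar (rhoB BS (alpha M ubar b) a),
        beta_inv M Abar (rhoB BT (beta M abar v) u)))).
Proof.
  intros HS HT pinv Hinv. split.
  - apply (sol_ext _ (F M)).
    + apply rmap_ext; exact Hinv.
    + apply F_sol; assumption.
  - intros a b u v. cbv zeta. rewrite (rmap_ext M pinv Hinv). reflexivity.
Qed.
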